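(* The two-dimensional subalgebras of ${\rm A}_3$ are exactly $\langle e_1,e_3\rangle$, $\langle e_1-e_2,e_3\rangle$, $\langle e_1,e_2\rangle$ and $\langle e_2,e_3\rangle$; up to automorphisms of ${\rm A}_3$ every two-dimensional subalgebra is equivalent to one of these four.
   Context: ${\rm A}_3$ is the complex algebra with basis $e_1,e_2,e_3$, unit $e_1$ ($e_1e_i=e_ie_1=e_i$), and $e_2e_2=e_2$; all other products of basis elements are zero. A subalgebra is a linear subspace closed under multiplication (it need not contain $e_1$). Equivalence up to automorphisms means one is mapped onto the other by an algebra automorphism. $\langle S\rangle$ denotes linear span. *)

(* Defs.v *)
From HB Require Import structures.
From mathcomp Require Import all_boot all_order all_algebra all_field.
Set Implicit Arguments. Unset Strict Implicit. Unset Printing Implicit Defensive.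
Import GRing.Theory.
Local Open Scope ring_scope.

(* The algebra A_3 over the complex numbers (algC), realised on coordinate
   row vectors 'rV[algC]_3 w.r.t. the basis e1, e2, e3. *)
Notation A3 := 'rV[algC]_3.

Definition i0 : 'I_3 := @Ordinal 3 0 isT.
Definition i1 : 'I_3 := @Ordinal 3 1 isT.
Definition i2 : 'I_3 := @Ordinal 3 2 isT.

Definition basisA3 (k : 'I_3) : A3 := \row_(j < 3) (if j == k then 1 else 0).
Definition e1 : A3 := basisA3 i0.
Definition e2 : A3 := basisA3 i1.
Definition e3 : A3 := basisA3 i2.

(* Bilinear product determined by: e1 unit, e2 e2 = e2, all other products
   of basis elements zero. For x = x1 e1 + x2 e2 + x3 e3 etc.:
   xy = x1y1 e1 + (x1y2 + x2y1 + x2y2) e2 + (x1y3 + x3y1) e3. *)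
Definition mulA3 (x y : A3) : A3 :=
  \row_(j < 3)
    (if j == i0 then x 0 i0 * y 0 i0
     else if j == i1 then x 0 i0 * y 0 i1 + x 0 i1 * y 0 i0 + x 0 i1 * y 0 i1
     else x 0 i0 * y 0 i2 + x 0 i2 * y 0 i0).

Definition is_subalgebra (S : {vspace A3}) : Prop :=
  forall x y, x \in S -> y \in S -> mulA3 x y \in S.

Definition is_automorphism (phi : A3 -> A3) : Prop :=
  [/\ forall (a : algC) (x y : A3), phi (a *: x + y) = a *: phi x + phi y,
      forall x y, phi (mulA3 x y) = mulA3 (phi x) (phi y)
    & bijective phi].

Definition maps_onto (phi : A3 -> A3) (S T : {vspace A3}) : Prop :=
  forall y, y \in T <-> exists2 x, x \in S & phi x = y.

Definition equiv_aut (S T : {vspace A3}) : Prop :=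
  exists phi, is_automorphism phi /\ maps_onto phi S T.

Definition listed2 : seq {vspace A3} :=
  [:: <<[:: e1; e3]>>%VS; <<[:: e1 - e2; e3]>>%VS;
      <<[:: e1; e2]>>%VS; <<[:: e2; e3]>>%VS].

(* Main.v *)
Require Import Defs.
From HB Require Import structures.
From mathcomp Require Import all_boot all_order all_algebra all_field.
From mathcomp Require Import ring.
Import GRing.Theory.
Local Open Scope ring_scope.
Ltac simp := rewrite /mulA3 /e1 /e2 /e3 /basisA3 ?mxE /=.

Lemma ord3_cases (P : 'I_3 -> Prop) : P i0 -> P i1 -> P i2 -> forall j, P j.
Proof.
move=> h0 h1 h2; case=> [[|[|[|//]]] Hj].
- by rewrite (_ : Ordinal Hj = i0) //; apply: val_inj.
- by rewrite (_ : Ordinal Hj = i1) //; apply: val_inj.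
- by rewrite (_ : Ordinal Hj = i2) //; apply: val_inj.
Qed.

Lemma row3P (x y : A3) : x 0 i0 = y 0 i0 -> x 0 i1 = y 0 i1 -> x 0 i2 = y 0 i2 -> x = y.
Proof.
move=> h0 h1 h2; apply/rowP => j; case: j => [[|[|[|//]]] Hj].
- by rewrite (_ : Ordinal Hj = i0) //; apply: val_inj.
- by rewrite (_ : Ordinal Hj = i1) //; apply: val_inj.
- by rewrite (_ : Ordinal Hj = i2) //; apply: val_inj.
Qed.

Lemma mem_span2 (u v x : A3) :
  x \in <<[:: u; v]>>%VS <-> exists a b, x = a *: u + b *: v.
Proof.
rewrite span_cons span_seq1; split.
  by move/memv_addP => [y /vlineP[a ->] [z /vlineP [b ->] ->]]; exists a, b.
by move=> [a [b ->]]; apply: memv_add; apply/vlineP; eexists.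
Qed.

Definition det3 (u v x : A3) : algC :=
  x 0 i0 * (u 0 i1 * v 0 i2 - u 0 i2 * v 0 i1)
+ x 0 i1 * (u 0 i2 * v 0 i0 - u 0 i0 * v 0 i2)
+ x 0 i2 * (u 0 i0 * v 0 i1 - u 0 i1 * v 0 i0).

Lemma cramer (u v w x : A3) (j : 'I_3) :
  det3 u v w * x 0 j = - (det3 w v x * u 0 j) - det3 u w x * v 0 j + det3 u v x * w 0 j.
Proof.
rewrite /det3; case: j => [[|[|[|//]]] Hj].
- by rewrite (_ : Ordinal Hj = i0); [ring | apply: val_inj].
- by rewrite (_ : Ordinal Hj = i1); [ring | apply: val_inj].
- by rewrite (_ : Ordinal Hj = i2); [ring | apply: val_inj].
Qed.

Lemma in_line (u v : A3) (i : 'I_3) : v 0 i != 0 ->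
  (forall j k : 'I_3, u 0 j * v 0 k = u 0 k * v 0 j) -> u \in <[v]>%VS.
Proof.
move=> hv h; apply/vlineP; exists (u 0 i / v 0 i); apply/rowP => j.
by rewrite mxE mulrAC -h mulfK.
Qed.

Lemma kernel (S : {vspace A3}) : \dim S = 2%N ->
  exists a b c : algC, [\/ a != 0, b != 0 | c != 0] /\
   forall x, x \in S <-> a * x 0 i0 + b * x 0 i1 + c * x 0 i2 = 0.
Proof.
move=> dimS.
have [X] : exists X : seq A3, [/\ size X = 2%N, <<X>>%VS = S & free X].
  exists (tval (vbasis S)); move/andP: (vbasisP S) => [/eqP -> ->].
  by rewrite size_tuple dimS.
case: X => [|u [|v [|w X]]] [] //= _ <- fr.
move: fr; rewrite free_cons span_seq1 seq1_free => /andP[nu nv].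
set a := u 0 i1 * v 0 i2 - u 0 i2 * v 0 i1.
set b := u 0 i2 * v 0 i0 - u 0 i0 * v 0 i2.
set c := u 0 i0 * v 0 i1 - u 0 i1 * v 0 i0.
have det_e : [/\ det3 u v e1 = a, det3 u v e2 = b & det3 u v e3 = c].
  by rewrite /det3 /a /b /c; simp; split; ring.
have nz : [\/ a != 0, b != 0 | c != 0].
  case: (eqVneq a 0) => ha; last by constructor 1.
  case: (eqVneq b 0) => hb; last by constructor 2.
  case: (eqVneq c 0) => hc; last by constructor 3.
  exfalso; move/negP: nu; apply.
  have hjk : forall j k : 'I_3, u 0 j * v 0 k = u 0 k * v 0 j.
    move: ha hb hc; rewrite /a /b /c => /eqP; rewrite subr_eq0 => /eqP ha.
    move=> /eqP; rewrite subr_eq0 => /eqP hb /eqP; rewrite subr_eq0 => /eqP hc.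
    apply: ord3_cases; apply: ord3_cases; first [ by [] | by rewrite ha | by rewrite -ha | by rewrite hb | by rewrite -hb
               | by rewrite hc | by rewrite -hc ].
  have : v != 0 by [].
  case: (eqVneq (v 0 i0) 0) => h0; last by move=> _; exact: (@in_line u v i0 h0 hjk).
  case: (eqVneq (v 0 i1) 0) => h1; last by move=> _; exact: (@in_line u v i1 h1 hjk).
  case: (eqVneq (v 0 i2) 0) => h2; last by move=> _; exact: (@in_line u v i2 h2 hjk).
  by move/eqP; case; apply: row3P; rewrite ?mxE.
exists a, b, c; split => // x; rewrite mem_span2; split.
  move=> [al [be ->]]; rewrite /a /b /c !mxE; ring.
move=> hx.
have hd : det3 u v x = 0 by rewrite /det3 -hx /a /b /c; ring.
have [w [hw]] : exists w, det3 u v w != 0.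
  case: det_e => d1 d2 d3.
  by case: nz => h; [exists e1 | exists e2 | exists e3]; rewrite ?d1 ?d2 ?d3.
exists (- det3 w v x / det3 u v w), (- det3 u w x / det3 u v w).
apply/rowP => j; apply: (mulfI hw); rewrite cramer hd !mxE.
by field.
Qed.

Definition L1 : {vspace A3} := <<[:: e1; e3]>>%VS.
Definition L2 : {vspace A3} := <<[:: e1 - e2; e3]>>%VS.
Definition L3 : {vspace A3} := <<[:: e1; e2]>>%VS.
Definition L4 : {vspace A3} := <<[:: e2; e3]>>%VS.

Lemma charL1 x : x \in L1 <-> x 0 i1 = 0.
Proof.
rewrite mem_span2; split; first by move=> [al [be ->]]; simp; ring.
by move=> h; exists (x 0 i0), (x 0 i2); apply: row3P; simp; rewrite ?h; ring.
Qed.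

Lemma charL2 x : x \in L2 <-> x 0 i0 + x 0 i1 = 0.
Proof.
rewrite mem_span2; split; first by move=> [al [be ->]]; simp; ring.
move/eqP; rewrite addr_eq0 => /eqP h.
by exists (x 0 i0), (x 0 i2); apply: row3P; simp; rewrite ?h; ring.
Qed.

Lemma charL3 x : x \in L3 <-> x 0 i2 = 0.
Proof.
rewrite mem_span2; split; first by move=> [al [be ->]]; simp; ring.
by move=> h; exists (x 0 i0), (x 0 i1); apply: row3P; simp; rewrite ?h; ring.
Qed.

Lemma charL4 x : x \in L4 <-> x 0 i0 = 0.
Proof.
rewrite mem_span2; split; first by move=> [al [be ->]]; simp; ring.
by move=> h; exists (x 0 i1), (x 0 i2); apply: row3P; simp; rewrite ?h; ring.
Qed.

Lemma scale_iff {k : algC} : k != 0 -> forall e, (k * e = 0 <-> e = 0).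
Proof.
move=> hk e; split; last by move->; rewrite mulr0.
by move/eqP; rewrite mulf_eq0 (negbTE hk) => /eqP.
Qed.

Lemma sub_L1 : is_subalgebra L1.
Proof. by move=> x y /charL1 hx /charL1 hy; apply/charL1; simp; rewrite hx hy; ring. Qed.
Lemma sub_L2 : is_subalgebra L2.
Proof.
move=> x y /charL2 hx /charL2 hy; apply/charL2; simp.
transitivity ((x 0 i0 + x 0 i1) * (y 0 i0 + y 0 i1)); first ring.
by rewrite hx mul0r.
Qed.
Lemma sub_L3 : is_subalgebra L3.
Proof. by move=> x y /charL3 hx /charL3 hy; apply/charL3; simp; rewrite hx hy; ring. Qed.
Lemma sub_L4 : is_subalgebra L4.
Proof. by move=> x y /charL4 hx /charL4 hy; apply/charL4; simp; rewrite hx hy; ring. Qed.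

Lemma dim2 (u v : A3) (i j : 'I_3) : u 0 i != 0 -> v 0 i = 0 -> v 0 j != 0 ->
  u 0 j = 0 -> \dim <<[:: u; v]>>%VS = 2%N.
Proof.
move=> ui vi vj uj.
have : free [:: u; v].
  rewrite free_cons span_seq1 seq1_free andbC.
  have -> : v != 0 by apply/eqP => h; move: vj; rewrite h mxE eqxx.
  apply/negP => /vlineP [k hk]; move: ui; rewrite hk mxE vi mulr0 eqxx //.
by move/eqP.
Qed.

Lemma classify (S : {vspace A3}) (a b c : algC) :
  [\/ a != 0, b != 0 | c != 0] ->
  (forall x, x \in S <-> a * x 0 i0 + b * x 0 i1 + c * x 0 i2 = 0) ->
  is_subalgebra S -> S \in listed2.
Proof.
move=> nz hS sS.
have cl : forall k : A3, a * k 0 i0 + b * k 0 i1 + c * k 0 i2 = 0 ->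
   let m := mulA3 k k in a * m 0 i0 + b * m 0 i1 + c * m 0 i2 = 0.
  by move=> k /hS hk; apply/hS; apply: sS.
have inl : forall L, L \in [:: L1; L2; L3; L4] -> L \in listed2 by [].
case: (eqVneq c 0) => hc.
  subst c; case: (eqVneq b 0) => hb.
    subst b; have ha : a != 0 by case: nz => //; rewrite eqxx.
    have -> : S = L4; last by apply: inl; rewrite !inE eqxx ?orbT.
    apply/vspaceP => x; apply/idP/idP => [/hS h | /charL4 h].
      by apply/charL4; apply/(scale_iff ha); rewrite -h; ring.
    by apply/hS; rewrite h; ring.
  have E := cl (b *: e1 - a *: e2).
  move: E; simp => E.
  have /eqP : a * (a - b) * b = 0 by rewrite -E //; ring.
  rewrite !mulf_eq0 (negbTE hb) orbF => /orP [/eqP a0 | ]; last first.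
    rewrite subr_eq0 => /eqP ab; subst a.
    have -> : S = L2; last by apply: inl; rewrite !inE eqxx ?orbT.
    apply/vspaceP => x; apply/idP/idP => [/hS h | /charL2 h].
      by apply/charL2; apply/(scale_iff hb); rewrite -h; ring.
    apply/hS; transitivity (b * (x 0 i0 + x 0 i1)); first ring.
    by rewrite h mulr0.
  subst a.
  have -> : S = L1; last by apply: inl; rewrite !inE eqxx ?orbT.
  apply/vspaceP => x; apply/idP/idP => [/hS h | /charL1 h].
    by apply/charL1; apply/(scale_iff hb); rewrite -h; ring.
  by apply/hS; rewrite h; ring.
have E1 := cl (c *: e1 - a *: e3).
move: E1; simp => E1.
have /eqP : - (a * (c * c)) = 0 by rewrite -E1 //; ring.
rewrite oppr_eq0 !mulf_eq0 (negbTE hc) !orbF => /eqP a0; subst a.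
have E2 := cl (c *: e2 - b *: e3).
move: E2; simp => E2.
have /eqP : b * (c * c) = 0 by rewrite -E2 //; ring.
rewrite !mulf_eq0 (negbTE hc) !orbF => /eqP b0; subst b.
have -> : S = L3; last by apply: inl; rewrite !inE eqxx ?orbT.
apply/vspaceP => x; apply/idP/idP => [/hS h | /charL3 h].
  by apply/charL3; apply/(scale_iff hc); rewrite -h; ring.
by apply/hS; rewrite h; ring.
Qed.

Theorem mainTheorem9 :
  (* each listed space is a two-dimensional subalgebra *)
  (forall T, T \in listed2 -> \dim T = 2%N /\ is_subalgebra T) /\
  (* every two-dimensional subalgebra is one of them *)
  (forall S : {vspace A3}, \dim S = 2%N -> is_subalgebra S -> S \in listed2) /\
  (* up to automorphism, every two-dimensional subalgebra is equivalent to one of them *)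
  (forall S : {vspace A3}, \dim S = 2%N -> is_subalgebra S ->
     exists2 T, T \in listed2 & equiv_aut S T).
Proof.
have P2 : forall S : {vspace A3}, \dim S = 2%N -> is_subalgebra S -> S \in listed2.
  move=> S dS sS; have [a [b [c [nz hS]]]] := kernel S dS.
  exact: classify nz hS sS.
split; last split => //.
  move=> T; rewrite /listed2 !inE => /or4P [] /eqP ->; split.
  - by apply: (@dim2 _ _ i0 i2); simp; rewrite ?subr0 ?oner_eq0.
  - exact: sub_L1.
  - by apply: (@dim2 _ _ i0 i2); simp; rewrite ?subr0 ?oner_eq0.
  - exact: sub_L2.
  - by apply: (@dim2 _ _ i0 i1); simp; rewrite ?subr0 ?oner_eq0.
  - exact: sub_L3.
  - by apply: (@dim2 _ _ i1 i2); simp; rewrite ?subr0 ?oner_eq0.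
  - exact: sub_L4.
move=> S dS sS; exists S; first exact: P2.
exists id; split.
  by split => //; exists id.
by move=> y; split; [exists y | case=> x hx <-].
Qed.
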